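(* Consider the GBDF5 coefficients $a_0=\tfrac{5\beta^4+40\beta^3+105\beta^2+100\beta+24}{120}$, $a_1=\tfrac{-10\beta^4-70\beta^3-135\beta^2-25\beta+77}{60}$, $a_2=\tfrac{15\beta^4+90\beta^3+120\beta^2-45\beta-43}{60}$, $a_3=\tfrac{-10\beta^4-50\beta^3-45\beta^2+25\beta+17}{60}$, $a_4=\tfrac{5\beta^4+20\beta^3+15\beta^2-10\beta-6}{120}$; $b_0=\tfrac{\beta(\beta^3+6\beta^2+11\beta+6)}{24}$, $b_1=\tfrac{-\beta^4-5\beta^3-5\beta^2+5\beta+6}{6}$, $b_2=\tfrac{\beta(\beta^3+4\beta^2+\beta-6)}{4}$, $b_3=\tfrac{\beta(-\beta^3-3\beta^2+\beta+3)}{6}$, $b_4=\tfrac{\beta(\beta^3+2\beta^2-\beta-2)}{24}$, $b_5=0$; $c_0=\tfrac{\beta^4+10\beta^3+35\beta^2+50\beta+24}{24}$, $c_1=-\tfrac{\beta(\beta^3+9\beta^2+26\beta+24)}{6}$, $c_2=\tfrac{\beta(\beta^3+8\beta^2+19\beta+12)}{4}$, $c_3=-\tfrac{\beta(\beta^3+7\beta^2+14\beta+8)}{6}$, $c_4=\tfrac{\beta(\beta^3+6\beta^2+11\beta+6)}{24}$. For $\beta\ge1$, $$\sigma_{\mathrm{F}}\ge1,\quad\sigma_{\mathrm{E}}\ge\frac{5(2\beta^4+16\beta^3+40\beta^2+32\beta+3)}{10\beta^4+60\beta^3+90\beta^2-32},\quad\lambda_{\mathrm{I}}\le\frac{5(2\beta^4+8\beta^3+4\beta^2-8\beta-3)}{10\beta^4+60\beta^3+90\beta^2-32},$$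 so that $\mathfrak{I}_{\mathrm{IE}}\le\dfrac{2\beta^4+8\beta^3+4\beta^2-8\beta-3}{2\beta^4+16\beta^3+40\beta^2+32\beta+3}$. If $\beta=20$, then $\sigma_{\mathrm{F}}\le\frac{399}{200}$, $\sigma_{\mathrm{E}}\le\frac{2501825}{2115968}$, $\lambda_{\mathrm{I}}\ge\frac{1769085}{2115968}$, so that $\mathfrak{I}_{\mathrm{IE}}\ge\frac{353817}{500365}$.
   Context: For coefficient vectors $(a_j)_{j=0}^{\mathrm{k}-1}$, $(b_j)_{j=0}^{\mathrm{k}}$, $(c_j)_{j=0}^{\mathrm{k}-1}$ define $a(\theta)=\sum_j a_je^{\imath j\theta}$, $b(\theta)=\sum_j b_je^{\imath j\theta}$, $c(\theta)=\sum_jc_je^{\imath j\theta}$ and $\sigma_{\mathrm{F}}=\max_{\theta\in[0,2\pi)}|1/a(\theta)|$, $\sigma_{\mathrm{E}}=\max_{\theta\in[0,2\pi)}|c(\theta)/a(\theta)|$, $\lambda_{\mathrm{I}}=\min_{\theta\in[0,2\pi)}\Re[b(\theta)/a(\theta)]$, $\mathfrak{I}_{\mathrm{IE}}=\lambda_{\mathrm{I}}/\sigma_{\mathrm{E}}$. Here $\mathrm{k}=5$. *)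

(* Defs.v *)
From Stdlib Require Import Reals Lra List.
From Coquelicot Require Import Coquelicot.
Import ListNotations.
Open Scope R_scope.

Definition expi (x : R) : C := (cos x, sin x).

Fixpoint tpoly_from (cs : list R) (j : nat) (theta : R) : C :=
  match cs with
  | nil => RtoC 0
  | x :: cs' => Cplus (Cmult (RtoC x) (expi (INR j * theta))) (tpoly_from cs' (S j) theta)
  end.

Definition tpoly (cs : list R) (theta : R) : C := tpoly_from cs 0 theta.

Definition gbdf5_a (B : R) : list R :=
  [ (5*B^4+40*B^3+105*B^2+100*B+24)/120;
    (-10*B^4-70*B^3-135*B^2-25*B+77)/60;
    (15*B^4+90*B^3+120*B^2-45*B-43)/60;
    (-10*B^4-50*B^3-45*B^2+25*B+17)/60;
    (5*B^4+20*B^3+15*B^2-10*B-6)/120 ].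

Definition gbdf5_b (B : R) : list R :=
  [ B*(B^3+6*B^2+11*B+6)/24;
    (-B^4-5*B^3-5*B^2+5*B+6)/6;
    B*(B^3+4*B^2+B-6)/4;
    B*(-B^3-3*B^2+B+3)/6;
    B*(B^3+2*B^2-B-2)/24;
    0 ].

Definition gbdf5_c (B : R) : list R :=
  [ (B^4+10*B^3+35*B^2+50*B+24)/24;
    -(B*(B^3+9*B^2+26*B+24)/6);
    B*(B^3+8*B^2+19*B+12)/4;
    -(B*(B^3+7*B^2+14*B+8)/6);
    B*(B^3+6*B^2+11*B+6)/24 ].

Definition IsMaxOnCircle (f : R -> R) (m : R) : Prop :=
  (exists theta, 0 <= theta < 2 * PI /\ f theta = m) /\
  (forall theta, 0 <= theta < 2 * PI -> f theta <= m).

Definition IsMinOnCircle (f : R -> R) (m : R) : Prop :=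
  (exists theta, 0 <= theta < 2 * PI /\ f theta = m) /\
  (forall theta, 0 <= theta < 2 * PI -> m <= f theta).

Definition IsSigmaF (B sF : R) : Prop :=
  IsMaxOnCircle (fun t => Cmod (Cinv (tpoly (gbdf5_a B) t))) sF.
Definition IsSigmaE (B sE : R) : Prop :=
  IsMaxOnCircle (fun t => Cmod (Cdiv (tpoly (gbdf5_c B) t) (tpoly (gbdf5_a B) t))) sE.
Definition IsLambdaI (B lI : R) : Prop :=
  IsMinOnCircle (fun t => Re (Cdiv (tpoly (gbdf5_b B) t) (tpoly (gbdf5_a B) t))) lI.

(* Main.v *)
Require Import Defs.
From Stdlib Require Import Reals Lra Psatz List FunctionalExtensionality.
From Coquelicot Require Import Coquelicot.
Import ListNotations.
Open Scope R_scope.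

Fixpoint TU (n : nat) (c : R) : R * R :=
  match n with
  | O => (1, 0)
  | S m => (fst (TU m c) * c - (1 - c^2) * snd (TU m c), snd (TU m c) * c + fst (TU m c))
  end.

Lemma TU_cos_sin n t : cos (INR n * t) = fst (TU n (cos t)) /\ sin (INR n * t) = sin t * snd (TU n (cos t)).
Proof.
  induction n as [|n [IHc IHs]].
  - simpl. rewrite Rmult_0_l, cos_0, sin_0. split; ring.
  - rewrite S_INR, Rmult_plus_distr_r, Rmult_1_l, cos_plus, sin_plus, IHc, IHs.
    simpl. pose proof (sin2 t) as H. unfold Rsqr in H. split.
    + replace (sin t * snd (TU n (cos t)) * sin t) with ((sin t * sin t) * snd (TU n (cos t))) by ring.
      rewrite H. ring.
    + ring.
Qed.

Fixpoint chR (L : list R) (j : nat) (c : R) : R :=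
  match L with nil => 0 | x :: L' => x * fst (TU j c) + chR L' (S j) c end.
Fixpoint chI (L : list R) (j : nat) (c : R) : R :=
  match L with nil => 0 | x :: L' => x * snd (TU j c) + chI L' (S j) c end.

Lemma tpoly_from_cheb L j t :
  fst (tpoly_from L j t) = chR L j (cos t) /\ snd (tpoly_from L j t) = sin t * chI L j (cos t).
Proof.
  revert j; induction L as [|x L IH]; intro j.
  - simpl. split; ring.
  - destruct (IH (S j)) as [H1 H2]. destruct (TU_cos_sin j t) as [Hc Hs].
    simpl. unfold expi. simpl. rewrite H1, H2, Hc, Hs. split; ring.
Qed.

Definition N2 (L : list R) (t : R) : R := fst (tpoly L t) ^ 2 + snd (tpoly L t) ^ 2.
Definition NC (L : list R) (c : R) : R := chR L 0 c ^ 2 + (1 - c^2) * chI L 0 c ^ 2.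
Definition DT (L M : list R) (t : R) : R := fst (tpoly L t) * fst (tpoly M t) + snd (tpoly L t) * snd (tpoly M t).
Definition DC (L M : list R) (c : R) : R := chR L 0 c * chR M 0 c + (1 - c^2) * (chI L 0 c * chI M 0 c).

Lemma N2_cheb L t : N2 L t = NC L (cos t).
Proof.
  unfold N2, NC, tpoly. destruct (tpoly_from_cheb L 0 t) as [H1 H2]. rewrite H1, H2.
  pose proof (sin2 t) as H. unfold Rsqr in H.
  replace ((sin t * chI L 0 (cos t)) ^ 2) with ((sin t * sin t) * chI L 0 (cos t) ^ 2) by ring.
  rewrite H. ring.
Qed.

Lemma DT_cheb L M t : DT L M t = DC L M (cos t).
Proof.
  unfold DT, DC, tpoly. destruct (tpoly_from_cheb L 0 t) as [H1 H2].
  destruct (tpoly_from_cheb M 0 t) as [H3 H4]. rewrite H1, H2, H3, H4.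
  pose proof (sin2 t) as H. unfold Rsqr in H.
  replace (sin t * chI L 0 (cos t) * (sin t * chI M 0 (cos t))) with ((sin t * sin t) * (chI L 0 (cos t) * chI M 0 (cos t))) by ring.
  rewrite H. ring.
Qed.

Lemma cont_tp L j : continuity (fun t => fst (tpoly_from L j t)) /\ continuity (fun t => snd (tpoly_from L j t)).
Proof.
  revert j; induction L as [|x L IH]; intro j.
  - simpl. split; apply continuity_const; intros a b; reflexivity.
  - destruct (IH (S j)) as [H1 H2].
    assert (Hc : continuity (fun t => cos (INR j * t))).
    { intro t. apply (continuity_pt_comp (fun t => INR j * t) cos).
      - apply continuity_pt_scal. apply continuity_pt_id.
      - apply continuity_cos. }
    assert (Hs : continuity (fun t => sin (INR j * t))).
    { intro t. apply (continuity_pt_comp (fun t => INR j * t) sin).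
      - apply continuity_pt_scal. apply continuity_pt_id.
      - apply continuity_sin. }
    simpl. unfold expi; simpl. split; intro t.
    + apply (continuity_pt_plus (fun t => x * cos (INR j * t) - 0 * sin (INR j * t))); [|apply H1].
      apply (continuity_pt_minus (fun t => x * cos (INR j * t)) (fun t => 0 * sin (INR j * t))).
      * apply (continuity_pt_scal (fun t => cos (INR j * t))). apply Hc.
      * apply (continuity_pt_scal (fun t => sin (INR j * t))). apply Hs.
    + apply (continuity_pt_plus (fun t => x * sin (INR j * t) + 0 * cos (INR j * t))); [|apply H2].
      apply (continuity_pt_plus (fun t => x * sin (INR j * t)) (fun t => 0 * cos (INR j * t))).
      * apply (continuity_pt_scal (fun t => sin (INR j * t))). apply Hs.
      * apply (continuity_pt_scal (fun t => cos (INR j * t))). apply Hc.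
Qed.

Lemma cont_fst L : continuity (fun t => fst (tpoly L t)).
Proof. apply (cont_tp L 0). Qed.
Lemma cont_snd L : continuity (fun t => snd (tpoly L t)).
Proof. apply (cont_tp L 0). Qed.

Lemma cont_N2 L : continuity (N2 L).
Proof.
  intro t. unfold N2.
  apply (continuity_pt_plus (fun t => fst (tpoly L t) ^ 2) (fun t => snd (tpoly L t) ^ 2)).
  - apply (continuity_pt_comp (fun t => fst (tpoly L t)) (fun x => x ^ 2)); [apply cont_fst|].
    apply derivable_continuous_pt. apply derivable_pt_pow.
  - apply (continuity_pt_comp (fun t => snd (tpoly L t)) (fun x => x ^ 2)); [apply cont_snd|].
    apply derivable_continuous_pt. apply derivable_pt_pow.
Qed.

Lemma cont_DT L M : continuity (DT L M).
Proof.
  intro t. unfold DT.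
  apply (continuity_pt_plus (fun t => fst (tpoly L t) * fst (tpoly M t)) (fun t => snd (tpoly L t) * snd (tpoly M t))).
  - apply (continuity_pt_mult (fun t => fst (tpoly L t)) (fun t => fst (tpoly M t))); apply cont_fst.
  - apply (continuity_pt_mult (fun t => snd (tpoly L t)) (fun t => snd (tpoly M t))); apply cont_snd.
Qed.

Lemma N2_ge0 L t : 0 <= N2 L t.
Proof. unfold N2. nra. Qed.

Lemma cont_sqrtN2 L : continuity (fun t => sqrt (N2 L t)).
Proof.
  intro t. apply (continuity_pt_comp (N2 L) sqrt); [apply cont_N2|].
  apply continuity_pt_sqrt. apply N2_ge0.
Qed.

Lemma nz_of_N2 L t : 0 < N2 L t -> tpoly L t <> 0%C.
Proof.
  intros H E. unfold N2 in H. rewrite E in H. simpl in H. lra.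
Qed.

Lemma fF_eq L t : 0 < N2 L t -> Cmod (Cinv (tpoly L t)) = / sqrt (N2 L t).
Proof. intro H. rewrite Cmod_inv by (apply nz_of_N2; auto). reflexivity. Qed.

Lemma fE_eq L M t : 0 < N2 L t -> Cmod (Cdiv (tpoly M t) (tpoly L t)) = sqrt (N2 M t) / sqrt (N2 L t).
Proof. intro H. rewrite Cmod_div by (apply nz_of_N2; auto). reflexivity. Qed.

Lemma fL_eq L M t : 0 < N2 L t -> Re (Cdiv (tpoly M t) (tpoly L t)) = DT M L t / N2 L t.
Proof.
  intro H. unfold N2, DT in *. unfold Cdiv, Cmult, Cinv, Re. simpl.
  field. unfold pow in H. lra.
Qed.

Lemma max_circle f : continuity f -> f (2*PI) = f 0 -> exists m, IsMaxOnCircle f m.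
Proof.
  intros Hc Hp. pose proof PI_RGT_0.
  destruct (continuity_ab_maj f 0 (2*PI)) as [Mx [H1 H2]]; [lra| intros; apply Hc |].
  exists (f Mx). split.
  - destruct (Req_dec Mx (2*PI)) as [E|E].
    + exists 0. split; [lra|]. rewrite <- Hp, E. reflexivity.
    + exists Mx. split; [lra|reflexivity].
  - intros th Hth. apply H1. lra.
Qed.

Lemma min_circle f : continuity f -> f (2*PI) = f 0 -> exists m, IsMinOnCircle f m.
Proof.
  intros Hc Hp. pose proof PI_RGT_0.
  destruct (continuity_ab_min f 0 (2*PI)) as [Mx [H1 H2]]; [lra| intros; apply Hc |].
  exists (f Mx). split.
  - destruct (Req_dec Mx (2*PI)) as [E|E].
    + exists 0. split; [lra|]. rewrite <- Hp, E. reflexivity.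
    + exists Mx. split; [lra|reflexivity].
  - intros th Hth. apply H1. lra.
Qed.

Lemma sigmaF_ex L : (forall t, 0 < N2 L t) ->
  exists m, IsMaxOnCircle (fun t => Cmod (Cinv (tpoly L t))) m.
Proof.
  intro HP.
  assert (E : (fun t => Cmod (Cinv (tpoly L t))) = (fun t => / sqrt (N2 L t))).
  { apply functional_extensionality. intro t. apply fF_eq, HP. }
  rewrite E. apply max_circle.
  - intro t. apply (continuity_pt_inv (fun t => sqrt (N2 L t))); [apply cont_sqrtN2|].
    apply Rgt_not_eq. apply sqrt_lt_R0. apply HP.
  - rewrite !N2_cheb, cos_2PI, cos_0. reflexivity.
Qed.

Lemma sigmaE_ex L M : (forall t, 0 < N2 L t) ->
  exists m, IsMaxOnCircle (fun t => Cmod (Cdiv (tpoly M t) (tpoly L t))) m.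
Proof.
  intro HP.
  assert (E : (fun t => Cmod (Cdiv (tpoly M t) (tpoly L t))) = (fun t => sqrt (N2 M t) / sqrt (N2 L t))).
  { apply functional_extensionality. intro t. apply fE_eq, HP. }
  rewrite E. apply max_circle.
  - intro t. apply (continuity_pt_div (fun t => sqrt (N2 M t)) (fun t => sqrt (N2 L t))); try apply cont_sqrtN2.
    apply Rgt_not_eq. apply sqrt_lt_R0. apply HP.
  - rewrite !N2_cheb, cos_2PI, cos_0. reflexivity.
Qed.

Lemma lambdaI_ex L M : (forall t, 0 < N2 L t) ->
  exists m, IsMinOnCircle (fun t => Re (Cdiv (tpoly M t) (tpoly L t))) m.
Proof.
  intro HP.
  assert (E : (fun t => Re (Cdiv (tpoly M t) (tpoly L t))) = (fun t => DT M L t / N2 L t)).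
  { apply functional_extensionality. intro t. apply fL_eq, HP. }
  rewrite E. apply min_circle.
  - intro t. apply (continuity_pt_div (DT M L) (N2 L)); [apply cont_DT|apply cont_N2|].
    apply Rgt_not_eq. apply HP.
  - rewrite !N2_cheb, !DT_cheb, cos_2PI, cos_0. reflexivity.
Qed.
Definition C3p (u:R) : R := (57/10)*u^0 + (28)*u^1 + (1877/45)*u^2 + (85/3)*u^3 + (88/9)*u^4 + (5/3)*u^5 + (1/9)*u^6.
Definition C4p (u:R) : R := (548/75)*u^0 + (382/9)*u^1 + (2663/30)*u^2 + (1703/18)*u^3 + (10453/180)*u^4 + (385/18)*u^5 + (14/3)*u^6 + (5/9)*u^7 + (1/36)*u^8.
Definition Dp (u:R) : R := (481681642607/6750000)*u^0 + (19916929978/16875)*u^1 + (4448998991693/506250)*u^2 + (35870515871639/911250)*u^3 + (20214243732241/168750)*u^4 + (16117706390431/60750)*u^5 + (67915674859226/151875)*u^6 + (1996478310569/3375)*u^7 + (10595686530611/16875)*u^8 + (1980860629553/3645)*u^9 + (23572724816977/60750)*u^10 + (1399925315093/6075)*u^11 + (20855147033093/182250)*u^12 + (57890497738/1215)*u^13 + (101096056784/6075)*u^14 + (17735524684/3645)*u^15 + (2400626822/2025)*u^16 + (19345838/81)*u^17 + (15928232/405)*u^18 + (1264640/243)*u^19 + (72871/135)*u^20 + (30800/729)*u^21 + (190/81)*u^22 + (20/243)*u^23 + (1/729)*u^24.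
Lemma Dp_pos u : 0 <= u -> 0 < Dp u.
Proof. intro Hu. unfold Dp.
  pose proof (pow_le u 1 Hu).
  pose proof (pow_le u 2 Hu).
  pose proof (pow_le u 3 Hu).
  pose proof (pow_le u 4 Hu).
  pose proof (pow_le u 5 Hu).
  pose proof (pow_le u 6 Hu).
  pose proof (pow_le u 7 Hu).
  pose proof (pow_le u 8 Hu).
  pose proof (pow_le u 9 Hu).
  pose proof (pow_le u 10 Hu).
  pose proof (pow_le u 11 Hu).
  pose proof (pow_le u 12 Hu).
  pose proof (pow_le u 13 Hu).
  pose proof (pow_le u 14 Hu).
  pose proof (pow_le u 15 Hu).
  pose proof (pow_le u 16 Hu).
  pose proof (pow_le u 17 Hu).
  pose proof (pow_le u 18 Hu).
  pose proof (pow_le u 19 Hu).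
  pose proof (pow_le u 20 Hu).
  pose proof (pow_le u 21 Hu).
  pose proof (pow_le u 22 Hu).
  pose proof (pow_le u 23 Hu).
  pose proof (pow_le u 24 Hu).
  lra.
Qed.

Lemma Dp_eq u : Dp u = 256 * C4p u ^ 3 - 27 * C3p u ^ 4.
Proof. unfold Dp, C3p, C4p. field. Qed.

Lemma C4p_pos u : 0 <= u -> 0 < C4p u.
Proof. intro Hu. unfold C4p.
  pose proof (pow_le u 1 Hu). pose proof (pow_le u 2 Hu). pose proof (pow_le u 3 Hu).
  pose proof (pow_le u 4 Hu). pose proof (pow_le u 5 Hu). pose proof (pow_le u 6 Hu).
  pose proof (pow_le u 7 Hu). pose proof (pow_le u 8 Hu). simpl pow at 1. lra. Qed.

Lemma quart_pos w C3 C4 p : 0 < C4 -> 0 < 256 * C4 ^ 3 - 27 * C3 ^ 4 -> 0 <= p ->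
  0 < 1 + p - C3 * w ^ 3 + C4 * w ^ 4.
Proof.
  intros H4 HD Hp.
  assert (Id : 256 * C4 ^ 3 * (1 - C3 * w ^ 3 + C4 * w ^ 4) =
     (256 * C4 ^ 3 - 27 * C3 ^ 4) + / 3 * ((4 * C4 * w - 3 * C3) ^ 2 * (2 * (4 * C4 * w) ^ 2 + (4 * C4 * w + 3 * C3) ^ 2))).
  { field. }
  assert (0 <= (4 * C4 * w - 3 * C3) ^ 2 * (2 * (4 * C4 * w) ^ 2 + (4 * C4 * w + 3 * C3) ^ 2)).
  { apply Rmult_le_pos; [apply pow2_ge_0|]. pose proof (pow2_ge_0 (4 * C4 * w)). pose proof (pow2_ge_0 (4 * C4 * w + 3 * C3)). lra. }
  assert (0 < 256 * C4 ^ 3) by (apply Rmult_lt_0_compat; [lra| apply pow_lt; lra]).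
  assert (0 < 256 * C4 ^ 3 * (1 - C3 * w ^ 3 + C4 * w ^ 4)) by (rewrite Id; lra).
  assert (0 < 1 - C3 * w ^ 3 + C4 * w ^ 4).
  { apply (Rmult_lt_reg_l (256 * C4 ^ 3)); lra. }
  lra.
Qed.

Lemma NA_pos B c : 1 <= B -> -1 <= c <= 1 -> 0 < NC (gbdf5_a B) c.
Proof.
  intros HB Hc.
  assert (E : NC (gbdf5_a B) c = 1 + ((1-c)/6 + 2*(1-c)^2/45) - C3p (B-1) * (1-c)^3 + C4p (B-1) * (1-c)^4).
  { unfold NC, gbdf5_a, C3p, C4p. simpl. field. }
  rewrite E. apply quart_pos.
  - apply C4p_pos. lra.
  - rewrite <- Dp_eq. apply Dp_pos. lra.
  - pose proof (pow2_ge_0 (1-c)). lra.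
Qed.
Definition P1w (w:R) : R := (119201/159201)*w^0 + (1/6)*w^1 + (2/45)*w^2 + (-108383353/10)*w^3 + (31227983196/25)*w^4.
Lemma P1_0 w : (0) <= w <= (1/256) -> 0 <= P1w w.
Proof. intros [Hl Hr]. unfold P1w.
  assert (A : 0 <= w - (0)) by lra. assert (B : 0 <= (1/256) - w) by lra.
  assert (0 <= (w - (0))^0 * ((1/256) - w)^4) by (apply Rmult_le_pos; apply pow_le; assumption).
  assert (0 <= (w - (0))^1 * ((1/256) - w)^3) by (apply Rmult_le_pos; apply pow_le; assumption).
  assert (0 <= (w - (0))^2 * ((1/256) - w)^2) by (apply Rmult_le_pos; apply pow_le; assumption).
  assert (0 <= (w - (0))^3 * ((1/256) - w)^1) by (apply Rmult_le_pos; apply pow_le; assumption).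
  assert (0 <= (w - (0))^4 * ((1/256) - w)^0) by (apply Rmult_le_pos; apply pow_le; assumption).
  lra.
Qed.
Lemma P1_1 w : (1/256) <= w <= (3/512) -> 0 <= P1w w.
Proof. intros [Hl Hr]. unfold P1w.
  assert (A : 0 <= w - (1/256)) by lra. assert (B : 0 <= (3/512) - w) by lra.
  assert (0 <= (w - (1/256))^0 * ((3/512) - w)^4) by (apply Rmult_le_pos; apply pow_le; assumption).
  assert (0 <= (w - (1/256))^1 * ((3/512) - w)^3) by (apply Rmult_le_pos; apply pow_le; assumption).
  assert (0 <= (w - (1/256))^2 * ((3/512) - w)^2) by (apply Rmult_le_pos; apply pow_le; assumption).
  assert (0 <= (w - (1/256))^3 * ((3/512) - w)^1) by (apply Rmult_le_pos; apply pow_le; assumption).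
  assert (0 <= (w - (1/256))^4 * ((3/512) - w)^0) by (apply Rmult_le_pos; apply pow_le; assumption).
  lra.
Qed.
Lemma P1_2 w : (3/512) <= w <= (13/2048) -> 0 <= P1w w.
Proof. intros [Hl Hr]. unfold P1w.
  assert (A : 0 <= w - (3/512)) by lra. assert (B : 0 <= (13/2048) - w) by lra.
  assert (0 <= (w - (3/512))^0 * ((13/2048) - w)^4) by (apply Rmult_le_pos; apply pow_le; assumption).
  assert (0 <= (w - (3/512))^1 * ((13/2048) - w)^3) by (apply Rmult_le_pos; apply pow_le; assumption).
  assert (0 <= (w - (3/512))^2 * ((13/2048) - w)^2) by (apply Rmult_le_pos; apply pow_le; assumption).
  assert (0 <= (w - (3/512))^3 * ((13/2048) - w)^1) by (apply Rmult_le_pos; apply pow_le; assumption).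
  assert (0 <= (w - (3/512))^4 * ((13/2048) - w)^0) by (apply Rmult_le_pos; apply pow_le; assumption).
  lra.
Qed.
Lemma P1_3 w : (13/2048) <= w <= (7/1024) -> 0 <= P1w w.
Proof. intros [Hl Hr]. unfold P1w.
  assert (A : 0 <= w - (13/2048)) by lra. assert (B : 0 <= (7/1024) - w) by lra.
  assert (0 <= (w - (13/2048))^0 * ((7/1024) - w)^4) by (apply Rmult_le_pos; apply pow_le; assumption).
  assert (0 <= (w - (13/2048))^1 * ((7/1024) - w)^3) by (apply Rmult_le_pos; apply pow_le; assumption).
  assert (0 <= (w - (13/2048))^2 * ((7/1024) - w)^2) by (apply Rmult_le_pos; apply pow_le; assumption).
  assert (0 <= (w - (13/2048))^3 * ((7/1024) - w)^1) by (apply Rmult_le_pos; apply pow_le; assumption).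
  assert (0 <= (w - (13/2048))^4 * ((7/1024) - w)^0) by (apply Rmult_le_pos; apply pow_le; assumption).
  lra.
Qed.
Lemma P1_4 w : (7/1024) <= w <= (1/128) -> 0 <= P1w w.
Proof. intros [Hl Hr]. unfold P1w.
  assert (A : 0 <= w - (7/1024)) by lra. assert (B : 0 <= (1/128) - w) by lra.
  assert (0 <= (w - (7/1024))^0 * ((1/128) - w)^4) by (apply Rmult_le_pos; apply pow_le; assumption).
  assert (0 <= (w - (7/1024))^1 * ((1/128) - w)^3) by (apply Rmult_le_pos; apply pow_le; assumption).
  assert (0 <= (w - (7/1024))^2 * ((1/128) - w)^2) by (apply Rmult_le_pos; apply pow_le; assumption).
  assert (0 <= (w - (7/1024))^3 * ((1/128) - w)^1) by (apply Rmult_le_pos; apply pow_le; assumption).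
  assert (0 <= (w - (7/1024))^4 * ((1/128) - w)^0) by (apply Rmult_le_pos; apply pow_le; assumption).
  lra.
Qed.
Lemma P1_5 w : (1/128) <= w <= (1/64) -> 0 <= P1w w.
Proof. intros [Hl Hr]. unfold P1w.
  assert (A : 0 <= w - (1/128)) by lra. assert (B : 0 <= (1/64) - w) by lra.
  assert (0 <= (w - (1/128))^0 * ((1/64) - w)^4) by (apply Rmult_le_pos; apply pow_le; assumption).
  assert (0 <= (w - (1/128))^1 * ((1/64) - w)^3) by (apply Rmult_le_pos; apply pow_le; assumption).
  assert (0 <= (w - (1/128))^2 * ((1/64) - w)^2) by (apply Rmult_le_pos; apply pow_le; assumption).
  assert (0 <= (w - (1/128))^3 * ((1/64) - w)^1) by (apply Rmult_le_pos; apply pow_le; assumption).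
  assert (0 <= (w - (1/128))^4 * ((1/64) - w)^0) by (apply Rmult_le_pos; apply pow_le; assumption).
  lra.
Qed.
Lemma P1_6 w : (1/64) <= w <= (1/32) -> 0 <= P1w w.
Proof. intros [Hl Hr]. unfold P1w.
  assert (A : 0 <= w - (1/64)) by lra. assert (B : 0 <= (1/32) - w) by lra.
  assert (0 <= (w - (1/64))^0 * ((1/32) - w)^4) by (apply Rmult_le_pos; apply pow_le; assumption).
  assert (0 <= (w - (1/64))^1 * ((1/32) - w)^3) by (apply Rmult_le_pos; apply pow_le; assumption).
  assert (0 <= (w - (1/64))^2 * ((1/32) - w)^2) by (apply Rmult_le_pos; apply pow_le; assumption).
  assert (0 <= (w - (1/64))^3 * ((1/32) - w)^1) by (apply Rmult_le_pos; apply pow_le; assumption).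
  assert (0 <= (w - (1/64))^4 * ((1/32) - w)^0) by (apply Rmult_le_pos; apply pow_le; assumption).
  lra.
Qed.
Lemma P1_7 w : (1/32) <= w <= (1/16) -> 0 <= P1w w.
Proof. intros [Hl Hr]. unfold P1w.
  assert (A : 0 <= w - (1/32)) by lra. assert (B : 0 <= (1/16) - w) by lra.
  assert (0 <= (w - (1/32))^0 * ((1/16) - w)^4) by (apply Rmult_le_pos; apply pow_le; assumption).
  assert (0 <= (w - (1/32))^1 * ((1/16) - w)^3) by (apply Rmult_le_pos; apply pow_le; assumption).
  assert (0 <= (w - (1/32))^2 * ((1/16) - w)^2) by (apply Rmult_le_pos; apply pow_le; assumption).
  assert (0 <= (w - (1/32))^3 * ((1/16) - w)^1) by (apply Rmult_le_pos; apply pow_le; assumption).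
  assert (0 <= (w - (1/32))^4 * ((1/16) - w)^0) by (apply Rmult_le_pos; apply pow_le; assumption).
  lra.
Qed.
Lemma P1_8 w : (1/16) <= w <= (1/8) -> 0 <= P1w w.
Proof. intros [Hl Hr]. unfold P1w.
  assert (A : 0 <= w - (1/16)) by lra. assert (B : 0 <= (1/8) - w) by lra.
  assert (0 <= (w - (1/16))^0 * ((1/8) - w)^4) by (apply Rmult_le_pos; apply pow_le; assumption).
  assert (0 <= (w - (1/16))^1 * ((1/8) - w)^3) by (apply Rmult_le_pos; apply pow_le; assumption).
  assert (0 <= (w - (1/16))^2 * ((1/8) - w)^2) by (apply Rmult_le_pos; apply pow_le; assumption).
  assert (0 <= (w - (1/16))^3 * ((1/8) - w)^1) by (apply Rmult_le_pos; apply pow_le; assumption).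
  assert (0 <= (w - (1/16))^4 * ((1/8) - w)^0) by (apply Rmult_le_pos; apply pow_le; assumption).
  lra.
Qed.
Lemma P1_9 w : (1/8) <= w <= (1/4) -> 0 <= P1w w.
Proof. intros [Hl Hr]. unfold P1w.
  assert (A : 0 <= w - (1/8)) by lra. assert (B : 0 <= (1/4) - w) by lra.
  assert (0 <= (w - (1/8))^0 * ((1/4) - w)^4) by (apply Rmult_le_pos; apply pow_le; assumption).
  assert (0 <= (w - (1/8))^1 * ((1/4) - w)^3) by (apply Rmult_le_pos; apply pow_le; assumption).
  assert (0 <= (w - (1/8))^2 * ((1/4) - w)^2) by (apply Rmult_le_pos; apply pow_le; assumption).
  assert (0 <= (w - (1/8))^3 * ((1/4) - w)^1) by (apply Rmult_le_pos; apply pow_le; assumption).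
  assert (0 <= (w - (1/8))^4 * ((1/4) - w)^0) by (apply Rmult_le_pos; apply pow_le; assumption).
  lra.
Qed.
Lemma P1_10 w : (1/4) <= w <= (1/2) -> 0 <= P1w w.
Proof. intros [Hl Hr]. unfold P1w.
  assert (A : 0 <= w - (1/4)) by lra. assert (B : 0 <= (1/2) - w) by lra.
  assert (0 <= (w - (1/4))^0 * ((1/2) - w)^4) by (apply Rmult_le_pos; apply pow_le; assumption).
  assert (0 <= (w - (1/4))^1 * ((1/2) - w)^3) by (apply Rmult_le_pos; apply pow_le; assumption).
  assert (0 <= (w - (1/4))^2 * ((1/2) - w)^2) by (apply Rmult_le_pos; apply pow_le; assumption).
  assert (0 <= (w - (1/4))^3 * ((1/2) - w)^1) by (apply Rmult_le_pos; apply pow_le; assumption).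
  assert (0 <= (w - (1/4))^4 * ((1/2) - w)^0) by (apply Rmult_le_pos; apply pow_le; assumption).
  lra.
Qed.
Lemma P1_11 w : (1/2) <= w <= (1) -> 0 <= P1w w.
Proof. intros [Hl Hr]. unfold P1w.
  assert (A : 0 <= w - (1/2)) by lra. assert (B : 0 <= (1) - w) by lra.
  assert (0 <= (w - (1/2))^0 * ((1) - w)^4) by (apply Rmult_le_pos; apply pow_le; assumption).
  assert (0 <= (w - (1/2))^1 * ((1) - w)^3) by (apply Rmult_le_pos; apply pow_le; assumption).
  assert (0 <= (w - (1/2))^2 * ((1) - w)^2) by (apply Rmult_le_pos; apply pow_le; assumption).
  assert (0 <= (w - (1/2))^3 * ((1) - w)^1) by (apply Rmult_le_pos; apply pow_le; assumption).
  assert (0 <= (w - (1/2))^4 * ((1) - w)^0) by (apply Rmult_le_pos; apply pow_le; assumption).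
  lra.
Qed.
Lemma P1_12 w : (1) <= w <= (2) -> 0 <= P1w w.
Proof. intros [Hl Hr]. unfold P1w.
  assert (A : 0 <= w - (1)) by lra. assert (B : 0 <= (2) - w) by lra.
  assert (0 <= (w - (1))^0 * ((2) - w)^4) by (apply Rmult_le_pos; apply pow_le; assumption).
  assert (0 <= (w - (1))^1 * ((2) - w)^3) by (apply Rmult_le_pos; apply pow_le; assumption).
  assert (0 <= (w - (1))^2 * ((2) - w)^2) by (apply Rmult_le_pos; apply pow_le; assumption).
  assert (0 <= (w - (1))^3 * ((2) - w)^1) by (apply Rmult_le_pos; apply pow_le; assumption).
  assert (0 <= (w - (1))^4 * ((2) - w)^0) by (apply Rmult_le_pos; apply pow_le; assumption).
  lra.
Qed.
Lemma P1_all w : 0 <= w <= 2 -> 0 <= P1w w.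
Proof. intros H.
  destruct (Rle_lt_dec w (1/256)). { apply P1_0; lra. }
  destruct (Rle_lt_dec w (3/512)). { apply P1_1; lra. }
  destruct (Rle_lt_dec w (13/2048)). { apply P1_2; lra. }
  destruct (Rle_lt_dec w (7/1024)). { apply P1_3; lra. }
  destruct (Rle_lt_dec w (1/128)). { apply P1_4; lra. }
  destruct (Rle_lt_dec w (1/64)). { apply P1_5; lra. }
  destruct (Rle_lt_dec w (1/32)). { apply P1_6; lra. }
  destruct (Rle_lt_dec w (1/16)). { apply P1_7; lra. }
  destruct (Rle_lt_dec w (1/8)). { apply P1_8; lra. }
  destruct (Rle_lt_dec w (1/4)). { apply P1_9; lra. }
  destruct (Rle_lt_dec w (1/2)). { apply P1_10; lra. }
  destruct (Rle_lt_dec w (1)). { apply P1_11; lra. }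
  apply P1_12; lra.
Qed.
Definition P2w (w:R) : R := (1781807753601/4477320577024)*w^0 + (6259128330625/26863923462144)*w^1 + (1251825666125/20147942596608)*w^2 + (-24032029900000200805/8954641154048)*w^3 + (269457323953042531695/1119330144256)*w^4.
Lemma P2_0 w : (0) <= w <= (1/128) -> 0 <= P2w w.
Proof. intros [Hl Hr]. unfold P2w.
  assert (A : 0 <= w - (0)) by lra. assert (B : 0 <= (1/128) - w) by lra.
  assert (0 <= (w - (0))^0 * ((1/128) - w)^4) by (apply Rmult_le_pos; apply pow_le; assumption).
  assert (0 <= (w - (0))^1 * ((1/128) - w)^3) by (apply Rmult_le_pos; apply pow_le; assumption).
  assert (0 <= (w - (0))^2 * ((1/128) - w)^2) by (apply Rmult_le_pos; apply pow_le; assumption).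
  assert (0 <= (w - (0))^3 * ((1/128) - w)^1) by (apply Rmult_le_pos; apply pow_le; assumption).
  assert (0 <= (w - (0))^4 * ((1/128) - w)^0) by (apply Rmult_le_pos; apply pow_le; assumption).
  lra.
Qed.
Lemma P2_1 w : (1/128) <= w <= (5/512) -> 0 <= P2w w.
Proof. intros [Hl Hr]. unfold P2w.
  assert (A : 0 <= w - (1/128)) by lra. assert (B : 0 <= (5/512) - w) by lra.
  assert (0 <= (w - (1/128))^0 * ((5/512) - w)^4) by (apply Rmult_le_pos; apply pow_le; assumption).
  assert (0 <= (w - (1/128))^1 * ((5/512) - w)^3) by (apply Rmult_le_pos; apply pow_le; assumption).
  assert (0 <= (w - (1/128))^2 * ((5/512) - w)^2) by (apply Rmult_le_pos; apply pow_le; assumption).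
  assert (0 <= (w - (1/128))^3 * ((5/512) - w)^1) by (apply Rmult_le_pos; apply pow_le; assumption).
  assert (0 <= (w - (1/128))^4 * ((5/512) - w)^0) by (apply Rmult_le_pos; apply pow_le; assumption).
  lra.
Qed.
Lemma P2_2 w : (5/512) <= w <= (3/256) -> 0 <= P2w w.
Proof. intros [Hl Hr]. unfold P2w.
  assert (A : 0 <= w - (5/512)) by lra. assert (B : 0 <= (3/256) - w) by lra.
  assert (0 <= (w - (5/512))^0 * ((3/256) - w)^4) by (apply Rmult_le_pos; apply pow_le; assumption).
  assert (0 <= (w - (5/512))^1 * ((3/256) - w)^3) by (apply Rmult_le_pos; apply pow_le; assumption).
  assert (0 <= (w - (5/512))^2 * ((3/256) - w)^2) by (apply Rmult_le_pos; apply pow_le; assumption).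
  assert (0 <= (w - (5/512))^3 * ((3/256) - w)^1) by (apply Rmult_le_pos; apply pow_le; assumption).
  assert (0 <= (w - (5/512))^4 * ((3/256) - w)^0) by (apply Rmult_le_pos; apply pow_le; assumption).
  lra.
Qed.
Lemma P2_3 w : (3/256) <= w <= (1/64) -> 0 <= P2w w.
Proof. intros [Hl Hr]. unfold P2w.
  assert (A : 0 <= w - (3/256)) by lra. assert (B : 0 <= (1/64) - w) by lra.
  assert (0 <= (w - (3/256))^0 * ((1/64) - w)^4) by (apply Rmult_le_pos; apply pow_le; assumption).
  assert (0 <= (w - (3/256))^1 * ((1/64) - w)^3) by (apply Rmult_le_pos; apply pow_le; assumption).
  assert (0 <= (w - (3/256))^2 * ((1/64) - w)^2) by (apply Rmult_le_pos; apply pow_le; assumption).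
  assert (0 <= (w - (3/256))^3 * ((1/64) - w)^1) by (apply Rmult_le_pos; apply pow_le; assumption).
  assert (0 <= (w - (3/256))^4 * ((1/64) - w)^0) by (apply Rmult_le_pos; apply pow_le; assumption).
  lra.
Qed.
Lemma P2_4 w : (1/64) <= w <= (1/32) -> 0 <= P2w w.
Proof. intros [Hl Hr]. unfold P2w.
  assert (A : 0 <= w - (1/64)) by lra. assert (B : 0 <= (1/32) - w) by lra.
  assert (0 <= (w - (1/64))^0 * ((1/32) - w)^4) by (apply Rmult_le_pos; apply pow_le; assumption).
  assert (0 <= (w - (1/64))^1 * ((1/32) - w)^3) by (apply Rmult_le_pos; apply pow_le; assumption).
  assert (0 <= (w - (1/64))^2 * ((1/32) - w)^2) by (apply Rmult_le_pos; apply pow_le; assumption).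
  assert (0 <= (w - (1/64))^3 * ((1/32) - w)^1) by (apply Rmult_le_pos; apply pow_le; assumption).
  assert (0 <= (w - (1/64))^4 * ((1/32) - w)^0) by (apply Rmult_le_pos; apply pow_le; assumption).
  lra.
Qed.
Lemma P2_5 w : (1/32) <= w <= (1/16) -> 0 <= P2w w.
Proof. intros [Hl Hr]. unfold P2w.
  assert (A : 0 <= w - (1/32)) by lra. assert (B : 0 <= (1/16) - w) by lra.
  assert (0 <= (w - (1/32))^0 * ((1/16) - w)^4) by (apply Rmult_le_pos; apply pow_le; assumption).
  assert (0 <= (w - (1/32))^1 * ((1/16) - w)^3) by (apply Rmult_le_pos; apply pow_le; assumption).
  assert (0 <= (w - (1/32))^2 * ((1/16) - w)^2) by (apply Rmult_le_pos; apply pow_le; assumption).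
  assert (0 <= (w - (1/32))^3 * ((1/16) - w)^1) by (apply Rmult_le_pos; apply pow_le; assumption).
  assert (0 <= (w - (1/32))^4 * ((1/16) - w)^0) by (apply Rmult_le_pos; apply pow_le; assumption).
  lra.
Qed.
Lemma P2_6 w : (1/16) <= w <= (1/8) -> 0 <= P2w w.
Proof. intros [Hl Hr]. unfold P2w.
  assert (A : 0 <= w - (1/16)) by lra. assert (B : 0 <= (1/8) - w) by lra.
  assert (0 <= (w - (1/16))^0 * ((1/8) - w)^4) by (apply Rmult_le_pos; apply pow_le; assumption).
  assert (0 <= (w - (1/16))^1 * ((1/8) - w)^3) by (apply Rmult_le_pos; apply pow_le; assumption).
  assert (0 <= (w - (1/16))^2 * ((1/8) - w)^2) by (apply Rmult_le_pos; apply pow_le; assumption).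
  assert (0 <= (w - (1/16))^3 * ((1/8) - w)^1) by (apply Rmult_le_pos; apply pow_le; assumption).
  assert (0 <= (w - (1/16))^4 * ((1/8) - w)^0) by (apply Rmult_le_pos; apply pow_le; assumption).
  lra.
Qed.
Lemma P2_7 w : (1/8) <= w <= (1/4) -> 0 <= P2w w.
Proof. intros [Hl Hr]. unfold P2w.
  assert (A : 0 <= w - (1/8)) by lra. assert (B : 0 <= (1/4) - w) by lra.
  assert (0 <= (w - (1/8))^0 * ((1/4) - w)^4) by (apply Rmult_le_pos; apply pow_le; assumption).
  assert (0 <= (w - (1/8))^1 * ((1/4) - w)^3) by (apply Rmult_le_pos; apply pow_le; assumption).
  assert (0 <= (w - (1/8))^2 * ((1/4) - w)^2) by (apply Rmult_le_pos; apply pow_le; assumption).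
  assert (0 <= (w - (1/8))^3 * ((1/4) - w)^1) by (apply Rmult_le_pos; apply pow_le; assumption).
  assert (0 <= (w - (1/8))^4 * ((1/4) - w)^0) by (apply Rmult_le_pos; apply pow_le; assumption).
  lra.
Qed.
Lemma P2_8 w : (1/4) <= w <= (1/2) -> 0 <= P2w w.
Proof. intros [Hl Hr]. unfold P2w.
  assert (A : 0 <= w - (1/4)) by lra. assert (B : 0 <= (1/2) - w) by lra.
  assert (0 <= (w - (1/4))^0 * ((1/2) - w)^4) by (apply Rmult_le_pos; apply pow_le; assumption).
  assert (0 <= (w - (1/4))^1 * ((1/2) - w)^3) by (apply Rmult_le_pos; apply pow_le; assumption).
  assert (0 <= (w - (1/4))^2 * ((1/2) - w)^2) by (apply Rmult_le_pos; apply pow_le; assumption).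
  assert (0 <= (w - (1/4))^3 * ((1/2) - w)^1) by (apply Rmult_le_pos; apply pow_le; assumption).
  assert (0 <= (w - (1/4))^4 * ((1/2) - w)^0) by (apply Rmult_le_pos; apply pow_le; assumption).
  lra.
Qed.
Lemma P2_9 w : (1/2) <= w <= (1) -> 0 <= P2w w.
Proof. intros [Hl Hr]. unfold P2w.
  assert (A : 0 <= w - (1/2)) by lra. assert (B : 0 <= (1) - w) by lra.
  assert (0 <= (w - (1/2))^0 * ((1) - w)^4) by (apply Rmult_le_pos; apply pow_le; assumption).
  assert (0 <= (w - (1/2))^1 * ((1) - w)^3) by (apply Rmult_le_pos; apply pow_le; assumption).
  assert (0 <= (w - (1/2))^2 * ((1) - w)^2) by (apply Rmult_le_pos; apply pow_le; assumption).
  assert (0 <= (w - (1/2))^3 * ((1) - w)^1) by (apply Rmult_le_pos; apply pow_le; assumption).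
  assert (0 <= (w - (1/2))^4 * ((1) - w)^0) by (apply Rmult_le_pos; apply pow_le; assumption).
  lra.
Qed.
Lemma P2_10 w : (1) <= w <= (2) -> 0 <= P2w w.
Proof. intros [Hl Hr]. unfold P2w.
  assert (A : 0 <= w - (1)) by lra. assert (B : 0 <= (2) - w) by lra.
  assert (0 <= (w - (1))^0 * ((2) - w)^4) by (apply Rmult_le_pos; apply pow_le; assumption).
  assert (0 <= (w - (1))^1 * ((2) - w)^3) by (apply Rmult_le_pos; apply pow_le; assumption).
  assert (0 <= (w - (1))^2 * ((2) - w)^2) by (apply Rmult_le_pos; apply pow_le; assumption).
  assert (0 <= (w - (1))^3 * ((2) - w)^1) by (apply Rmult_le_pos; apply pow_le; assumption).
  assert (0 <= (w - (1))^4 * ((2) - w)^0) by (apply Rmult_le_pos; apply pow_le; assumption).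
  lra.
Qed.
Lemma P2_all w : 0 <= w <= 2 -> 0 <= P2w w.
Proof. intros H.
  destruct (Rle_lt_dec w (1/128)). { apply P2_0; lra. }
  destruct (Rle_lt_dec w (5/512)). { apply P2_1; lra. }
  destruct (Rle_lt_dec w (3/256)). { apply P2_2; lra. }
  destruct (Rle_lt_dec w (1/64)). { apply P2_3; lra. }
  destruct (Rle_lt_dec w (1/32)). { apply P2_4; lra. }
  destruct (Rle_lt_dec w (1/16)). { apply P2_5; lra. }
  destruct (Rle_lt_dec w (1/8)). { apply P2_6; lra. }
  destruct (Rle_lt_dec w (1/4)). { apply P2_7; lra. }
  destruct (Rle_lt_dec w (1/2)). { apply P2_8; lra. }
  destruct (Rle_lt_dec w (1)). { apply P2_9; lra. }
  apply P2_10; lra.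
Qed.
Definition P3w (w:R) : R := (346883/2115968)*w^0 + (-3885053/12695808)*w^1 + (-1118687/15869760)*w^2 + (-66772003256257/63479040)*w^3 + (741531983094211/7934880)*w^4.
Lemma P3_0 w : (0) <= w <= (1/128) -> 0 <= P3w w.
Proof. intros [Hl Hr]. unfold P3w.
  assert (A : 0 <= w - (0)) by lra. assert (B : 0 <= (1/128) - w) by lra.
  assert (0 <= (w - (0))^0 * ((1/128) - w)^4) by (apply Rmult_le_pos; apply pow_le; assumption).
  assert (0 <= (w - (0))^1 * ((1/128) - w)^3) by (apply Rmult_le_pos; apply pow_le; assumption).
  assert (0 <= (w - (0))^2 * ((1/128) - w)^2) by (apply Rmult_le_pos; apply pow_le; assumption).
  assert (0 <= (w - (0))^3 * ((1/128) - w)^1) by (apply Rmult_le_pos; apply pow_le; assumption).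
  assert (0 <= (w - (0))^4 * ((1/128) - w)^0) by (apply Rmult_le_pos; apply pow_le; assumption).
  lra.
Qed.
Lemma P3_1 w : (1/128) <= w <= (9/1024) -> 0 <= P3w w.
Proof. intros [Hl Hr]. unfold P3w.
  assert (A : 0 <= w - (1/128)) by lra. assert (B : 0 <= (9/1024) - w) by lra.
  assert (0 <= (w - (1/128))^0 * ((9/1024) - w)^4) by (apply Rmult_le_pos; apply pow_le; assumption).
  assert (0 <= (w - (1/128))^1 * ((9/1024) - w)^3) by (apply Rmult_le_pos; apply pow_le; assumption).
  assert (0 <= (w - (1/128))^2 * ((9/1024) - w)^2) by (apply Rmult_le_pos; apply pow_le; assumption).
  assert (0 <= (w - (1/128))^3 * ((9/1024) - w)^1) by (apply Rmult_le_pos; apply pow_le; assumption).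
  assert (0 <= (w - (1/128))^4 * ((9/1024) - w)^0) by (apply Rmult_le_pos; apply pow_le; assumption).
  lra.
Qed.
Lemma P3_2 w : (9/1024) <= w <= (5/512) -> 0 <= P3w w.
Proof. intros [Hl Hr]. unfold P3w.
  assert (A : 0 <= w - (9/1024)) by lra. assert (B : 0 <= (5/512) - w) by lra.
  assert (0 <= (w - (9/1024))^0 * ((5/512) - w)^4) by (apply Rmult_le_pos; apply pow_le; assumption).
  assert (0 <= (w - (9/1024))^1 * ((5/512) - w)^3) by (apply Rmult_le_pos; apply pow_le; assumption).
  assert (0 <= (w - (9/1024))^2 * ((5/512) - w)^2) by (apply Rmult_le_pos; apply pow_le; assumption).
  assert (0 <= (w - (9/1024))^3 * ((5/512) - w)^1) by (apply Rmult_le_pos; apply pow_le; assumption).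
  assert (0 <= (w - (9/1024))^4 * ((5/512) - w)^0) by (apply Rmult_le_pos; apply pow_le; assumption).
  lra.
Qed.
Lemma P3_3 w : (5/512) <= w <= (3/256) -> 0 <= P3w w.
Proof. intros [Hl Hr]. unfold P3w.
  assert (A : 0 <= w - (5/512)) by lra. assert (B : 0 <= (3/256) - w) by lra.
  assert (0 <= (w - (5/512))^0 * ((3/256) - w)^4) by (apply Rmult_le_pos; apply pow_le; assumption).
  assert (0 <= (w - (5/512))^1 * ((3/256) - w)^3) by (apply Rmult_le_pos; apply pow_le; assumption).
  assert (0 <= (w - (5/512))^2 * ((3/256) - w)^2) by (apply Rmult_le_pos; apply pow_le; assumption).
  assert (0 <= (w - (5/512))^3 * ((3/256) - w)^1) by (apply Rmult_le_pos; apply pow_le; assumption).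
  assert (0 <= (w - (5/512))^4 * ((3/256) - w)^0) by (apply Rmult_le_pos; apply pow_le; assumption).
  lra.
Qed.
Lemma P3_4 w : (3/256) <= w <= (1/64) -> 0 <= P3w w.
Proof. intros [Hl Hr]. unfold P3w.
  assert (A : 0 <= w - (3/256)) by lra. assert (B : 0 <= (1/64) - w) by lra.
  assert (0 <= (w - (3/256))^0 * ((1/64) - w)^4) by (apply Rmult_le_pos; apply pow_le; assumption).
  assert (0 <= (w - (3/256))^1 * ((1/64) - w)^3) by (apply Rmult_le_pos; apply pow_le; assumption).
  assert (0 <= (w - (3/256))^2 * ((1/64) - w)^2) by (apply Rmult_le_pos; apply pow_le; assumption).
  assert (0 <= (w - (3/256))^3 * ((1/64) - w)^1) by (apply Rmult_le_pos; apply pow_le; assumption).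
  assert (0 <= (w - (3/256))^4 * ((1/64) - w)^0) by (apply Rmult_le_pos; apply pow_le; assumption).
  lra.
Qed.
Lemma P3_5 w : (1/64) <= w <= (1/32) -> 0 <= P3w w.
Proof. intros [Hl Hr]. unfold P3w.
  assert (A : 0 <= w - (1/64)) by lra. assert (B : 0 <= (1/32) - w) by lra.
  assert (0 <= (w - (1/64))^0 * ((1/32) - w)^4) by (apply Rmult_le_pos; apply pow_le; assumption).
  assert (0 <= (w - (1/64))^1 * ((1/32) - w)^3) by (apply Rmult_le_pos; apply pow_le; assumption).
  assert (0 <= (w - (1/64))^2 * ((1/32) - w)^2) by (apply Rmult_le_pos; apply pow_le; assumption).
  assert (0 <= (w - (1/64))^3 * ((1/32) - w)^1) by (apply Rmult_le_pos; apply pow_le; assumption).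
  assert (0 <= (w - (1/64))^4 * ((1/32) - w)^0) by (apply Rmult_le_pos; apply pow_le; assumption).
  lra.
Qed.
Lemma P3_6 w : (1/32) <= w <= (1/16) -> 0 <= P3w w.
Proof. intros [Hl Hr]. unfold P3w.
  assert (A : 0 <= w - (1/32)) by lra. assert (B : 0 <= (1/16) - w) by lra.
  assert (0 <= (w - (1/32))^0 * ((1/16) - w)^4) by (apply Rmult_le_pos; apply pow_le; assumption).
  assert (0 <= (w - (1/32))^1 * ((1/16) - w)^3) by (apply Rmult_le_pos; apply pow_le; assumption).
  assert (0 <= (w - (1/32))^2 * ((1/16) - w)^2) by (apply Rmult_le_pos; apply pow_le; assumption).
  assert (0 <= (w - (1/32))^3 * ((1/16) - w)^1) by (apply Rmult_le_pos; apply pow_le; assumption).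
  assert (0 <= (w - (1/32))^4 * ((1/16) - w)^0) by (apply Rmult_le_pos; apply pow_le; assumption).
  lra.
Qed.
Lemma P3_7 w : (1/16) <= w <= (1/8) -> 0 <= P3w w.
Proof. intros [Hl Hr]. unfold P3w.
  assert (A : 0 <= w - (1/16)) by lra. assert (B : 0 <= (1/8) - w) by lra.
  assert (0 <= (w - (1/16))^0 * ((1/8) - w)^4) by (apply Rmult_le_pos; apply pow_le; assumption).
  assert (0 <= (w - (1/16))^1 * ((1/8) - w)^3) by (apply Rmult_le_pos; apply pow_le; assumption).
  assert (0 <= (w - (1/16))^2 * ((1/8) - w)^2) by (apply Rmult_le_pos; apply pow_le; assumption).
  assert (0 <= (w - (1/16))^3 * ((1/8) - w)^1) by (apply Rmult_le_pos; apply pow_le; assumption).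
  assert (0 <= (w - (1/16))^4 * ((1/8) - w)^0) by (apply Rmult_le_pos; apply pow_le; assumption).
  lra.
Qed.
Lemma P3_8 w : (1/8) <= w <= (1/4) -> 0 <= P3w w.
Proof. intros [Hl Hr]. unfold P3w.
  assert (A : 0 <= w - (1/8)) by lra. assert (B : 0 <= (1/4) - w) by lra.
  assert (0 <= (w - (1/8))^0 * ((1/4) - w)^4) by (apply Rmult_le_pos; apply pow_le; assumption).
  assert (0 <= (w - (1/8))^1 * ((1/4) - w)^3) by (apply Rmult_le_pos; apply pow_le; assumption).
  assert (0 <= (w - (1/8))^2 * ((1/4) - w)^2) by (apply Rmult_le_pos; apply pow_le; assumption).
  assert (0 <= (w - (1/8))^3 * ((1/4) - w)^1) by (apply Rmult_le_pos; apply pow_le; assumption).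
  assert (0 <= (w - (1/8))^4 * ((1/4) - w)^0) by (apply Rmult_le_pos; apply pow_le; assumption).
  lra.
Qed.
Lemma P3_9 w : (1/4) <= w <= (1/2) -> 0 <= P3w w.
Proof. intros [Hl Hr]. unfold P3w.
  assert (A : 0 <= w - (1/4)) by lra. assert (B : 0 <= (1/2) - w) by lra.
  assert (0 <= (w - (1/4))^0 * ((1/2) - w)^4) by (apply Rmult_le_pos; apply pow_le; assumption).
  assert (0 <= (w - (1/4))^1 * ((1/2) - w)^3) by (apply Rmult_le_pos; apply pow_le; assumption).
  assert (0 <= (w - (1/4))^2 * ((1/2) - w)^2) by (apply Rmult_le_pos; apply pow_le; assumption).
  assert (0 <= (w - (1/4))^3 * ((1/2) - w)^1) by (apply Rmult_le_pos; apply pow_le; assumption).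
  assert (0 <= (w - (1/4))^4 * ((1/2) - w)^0) by (apply Rmult_le_pos; apply pow_le; assumption).
  lra.
Qed.
Lemma P3_10 w : (1/2) <= w <= (1) -> 0 <= P3w w.
Proof. intros [Hl Hr]. unfold P3w.
  assert (A : 0 <= w - (1/2)) by lra. assert (B : 0 <= (1) - w) by lra.
  assert (0 <= (w - (1/2))^0 * ((1) - w)^4) by (apply Rmult_le_pos; apply pow_le; assumption).
  assert (0 <= (w - (1/2))^1 * ((1) - w)^3) by (apply Rmult_le_pos; apply pow_le; assumption).
  assert (0 <= (w - (1/2))^2 * ((1) - w)^2) by (apply Rmult_le_pos; apply pow_le; assumption).
  assert (0 <= (w - (1/2))^3 * ((1) - w)^1) by (apply Rmult_le_pos; apply pow_le; assumption).
  assert (0 <= (w - (1/2))^4 * ((1) - w)^0) by (apply Rmult_le_pos; apply pow_le; assumption).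
  lra.
Qed.
Lemma P3_11 w : (1) <= w <= (2) -> 0 <= P3w w.
Proof. intros [Hl Hr]. unfold P3w.
  assert (A : 0 <= w - (1)) by lra. assert (B : 0 <= (2) - w) by lra.
  assert (0 <= (w - (1))^0 * ((2) - w)^4) by (apply Rmult_le_pos; apply pow_le; assumption).
  assert (0 <= (w - (1))^1 * ((2) - w)^3) by (apply Rmult_le_pos; apply pow_le; assumption).
  assert (0 <= (w - (1))^2 * ((2) - w)^2) by (apply Rmult_le_pos; apply pow_le; assumption).
  assert (0 <= (w - (1))^3 * ((2) - w)^1) by (apply Rmult_le_pos; apply pow_le; assumption).
  assert (0 <= (w - (1))^4 * ((2) - w)^0) by (apply Rmult_le_pos; apply pow_le; assumption).
  lra.
Qed.
Lemma P3_all w : 0 <= w <= 2 -> 0 <= P3w w.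
Proof. intros H.
  destruct (Rle_lt_dec w (1/128)). { apply P3_0; lra. }
  destruct (Rle_lt_dec w (9/1024)). { apply P3_1; lra. }
  destruct (Rle_lt_dec w (5/512)). { apply P3_2; lra. }
  destruct (Rle_lt_dec w (3/256)). { apply P3_3; lra. }
  destruct (Rle_lt_dec w (1/64)). { apply P3_4; lra. }
  destruct (Rle_lt_dec w (1/32)). { apply P3_5; lra. }
  destruct (Rle_lt_dec w (1/16)). { apply P3_6; lra. }
  destruct (Rle_lt_dec w (1/8)). { apply P3_7; lra. }
  destruct (Rle_lt_dec w (1/4)). { apply P3_8; lra. }
  destruct (Rle_lt_dec w (1/2)). { apply P3_9; lra. }
  destruct (Rle_lt_dec w (1)). { apply P3_10; lra. }
  apply P3_11; lra.
Qed.
Lemma B20_F c : -1 <= c <= 1 -> (200/399)^2 <= NC (gbdf5_a 20) c.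
Proof.
  intro Hc. assert (E : NC (gbdf5_a 20) c - (200/399)^2 = P1w (1 - c)).
  { unfold NC, gbdf5_a, P1w. simpl. field. }
  pose proof (P1_all (1-c)). lra.
Qed.
Lemma B20_E c : -1 <= c <= 1 -> NC (gbdf5_c 20) c <= (2501825/2115968)^2 * NC (gbdf5_a 20) c.
Proof.
  intro Hc. assert (E : (2501825/2115968)^2 * NC (gbdf5_a 20) c - NC (gbdf5_c 20) c = P2w (1 - c)).
  { unfold NC, gbdf5_a, gbdf5_c, P2w. simpl. field. }
  pose proof (P2_all (1-c)). lra.
Qed.
Lemma B20_L c : -1 <= c <= 1 -> 1769085/2115968 * NC (gbdf5_a 20) c <= DC (gbdf5_b 20) (gbdf5_a 20) c.
Proof.
  intro Hc. assert (E : DC (gbdf5_b 20) (gbdf5_a 20) c - 1769085/2115968 * NC (gbdf5_a 20) c = P3w (1 - c)).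
  { unfold NC, DC, gbdf5_a, gbdf5_b, P3w. simpl. field. }
  pose proof (P3_all (1-c)). lra.
Qed.

Lemma HPa B : 1 <= B -> forall t, 0 < N2 (gbdf5_a B) t.
Proof. intros HB t. rewrite N2_cheb. apply NA_pos; [assumption| apply COS_bound]. Qed.

Lemma sqrt_sq x : 0 <= x -> sqrt (x ^ 2) = x.
Proof. intro H. apply sqrt_pow2. exact H. Qed.

Lemma part1 B sF sE lI : 1 <= B -> IsSigmaF B sF -> IsSigmaE B sE -> IsLambdaI B lI ->
       1 <= sF /\
       5*(2*B^4+16*B^3+40*B^2+32*B+3) / (10*B^4+60*B^3+90*B^2-32) <= sE /\
       lI <= 5*(2*B^4+8*B^3+4*B^2-8*B-3) / (10*B^4+60*B^3+90*B^2-32) /\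
       lI / sE <= (2*B^4+8*B^3+4*B^2-8*B-3) / (2*B^4+16*B^3+40*B^2+32*B+3).
Proof.
  intros HB [_ HF] [_ HE] [_ HL].
  pose proof (HPa B HB) as HP. pose proof PI_RGT_0 as Hpi.
  assert (B2 : 1 <= B^2) by nra. assert (B3 : 1 <= B^3) by nra. assert (B4 : 1 <= B^4) by nra.
  set (Dn := 10*B^4+60*B^3+90*B^2-32).
  assert (HD : 0 < Dn) by (unfold Dn; lra).
  set (Nc := 2*B^4+16*B^3+40*B^2+32*B+3).
  set (Nb := 2*B^4+8*B^3+4*B^2-8*B-3).
  assert (HNc : 0 < Nc) by (unfold Nc; lra).
  assert (HNb : 0 < Nb) by (unfold Nb; nra).
  assert (Ea : NC (gbdf5_a B) (-1) = (Dn/15)^2) by (unfold NC, gbdf5_a, Dn; simpl; field).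
  assert (Ec : NC (gbdf5_c B) (-1) = (Nc/3)^2) by (unfold NC, gbdf5_c, Nc; simpl; field).
  assert (Eb : DC (gbdf5_b B) (gbdf5_a B) (-1) = (Nb/3) * (Dn/15)) by (unfold DC, gbdf5_a, gbdf5_b, Nb, Dn; simpl; field).
  assert (E1 : NC (gbdf5_a B) 1 = 1) by (unfold NC, gbdf5_a; simpl; field).
  assert (F1 : 1 <= sF).
  { specialize (HF 0 ltac:(lra)). simpl in HF. rewrite fF_eq in HF by apply HP.
    rewrite N2_cheb, cos_0, E1, sqrt_1, Rinv_1 in HF. exact HF. }
  assert (FE : 5 * Nc / Dn <= sE).
  { specialize (HE PI ltac:(lra)). simpl in HE. rewrite fE_eq in HE by apply HP.
    rewrite !N2_cheb, cos_PI, Ea, Ec, !sqrt_sq in HE by lra.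
    replace (5 * Nc / Dn) with (Nc / 3 / (Dn / 15)) by (field; lra). exact HE. }
  assert (FL : lI <= 5 * Nb / Dn).
  { specialize (HL PI ltac:(lra)). cbv beta in HL. rewrite fL_eq in HL by apply HP.
    rewrite DT_cheb, N2_cheb, cos_PI, Ea, Eb in HL.
    replace (5 * Nb / Dn) with (Nb / 3 * (Dn / 15) / (Dn / 15) ^ 2) by (field; lra). exact HL. }
  assert (HsE : 0 < sE).
  { apply Rlt_le_trans with (5 * Nc / Dn); [|exact FE]. apply Rdiv_lt_0_compat; lra. }
  split; [exact F1|]. split; [exact FE|]. split; [exact FL|].
  apply Rmult_le_reg_r with (sE * Nc); [nra|].
  replace (lI / sE * (sE * Nc)) with (lI * Nc) by (field; lra).
  replace (Nb / Nc * (sE * Nc)) with (Nb * sE) by (field; lra).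
  destruct (Rle_lt_dec 0 lI) as [H0|H0]; [|nra].
  assert (A1 : lI * Dn <= 5 * Nb).
  { apply Rmult_le_reg_r with (/ Dn). apply Rinv_0_lt_compat; lra.
    replace (lI * Dn * / Dn) with lI by (field; lra). exact FL. }
  assert (A2 : 5 * Nc <= sE * Dn).
  { apply Rmult_le_reg_r with (/ Dn). apply Rinv_0_lt_compat; lra.
    replace (sE * Dn * / Dn) with sE by (field; lra). exact FE. }
  apply Rmult_le_reg_r with (5 * Dn); [lra|].
  nra.
Qed.

Theorem mainTheorem9 :
  (forall B : R, 1 <= B ->
     exists sF sE lI : R,
       IsSigmaF B sF /\ IsSigmaE B sE /\ IsLambdaI B lI /\
       1 <= sF /\
       5*(2*B^4+16*B^3+40*B^2+32*B+3) / (10*B^4+60*B^3+90*B^2-32) <= sE /\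
       lI <= 5*(2*B^4+8*B^3+4*B^2-8*B-3) / (10*B^4+60*B^3+90*B^2-32) /\
       lI / sE <= (2*B^4+8*B^3+4*B^2-8*B-3) / (2*B^4+16*B^3+40*B^2+32*B+3)) /\
  (exists sF sE lI : R,
     IsSigmaF 20 sF /\ IsSigmaE 20 sE /\ IsLambdaI 20 lI /\
     sF <= 399/200 /\
     sE <= 2501825/2115968 /\
     1769085/2115968 <= lI /\
     353817/500365 <= lI / sE).
Proof.
  split.
  - intros B HB.
    destruct (sigmaF_ex _ (HPa B HB)) as [sF HF].
    destruct (sigmaE_ex _ (gbdf5_c B) (HPa B HB)) as [sE HE].
    destruct (lambdaI_ex _ (gbdf5_b B) (HPa B HB)) as [lI HL].
    exists sF, sE, lI. split; [exact HF|]. split; [exact HE|]. split; [exact HL|].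
    apply part1; assumption.
  - assert (H20 : 1 <= 20) by lra.
    pose proof (HPa 20 H20) as HP.
    destruct (sigmaF_ex _ HP) as [sF HF].
    destruct (sigmaE_ex _ (gbdf5_c 20) HP) as [sE HE].
    destruct (lambdaI_ex _ (gbdf5_b 20) HP) as [lI HL].
    destruct (part1 20 sF sE lI H20 HF HE HL) as [_ [FE _]].
    exists sF, sE, lI. split; [exact HF|]. split; [exact HE|]. split; [exact HL|].
    destruct HF as [[tF [_ EF]] _]. destruct HE as [[tE [_ EE]] _]. destruct HL as [[tL [_ EL]] _].
    assert (HsE : 0 < sE).
    { eapply Rlt_le_trans; [|exact FE]. apply Rdiv_lt_0_compat; simpl; lra. }
    assert (SF : sF <= 399/200).
    { rewrite <- EF, fF_eq by apply HP. rewrite N2_cheb.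
      pose proof (B20_F (cos tF) (COS_bound tF)) as K.
      assert (K2 : 200/399 <= sqrt (NC (gbdf5_a 20) (cos tF))).
      { rewrite <- (sqrt_sq (200/399)) by lra. apply sqrt_le_1_alt. exact K. }
      replace (399/200) with (/ (200/399)) by field.
      apply Rinv_le_contravar; lra. }
    assert (SE : sE <= 2501825/2115968).
    { rewrite <- EE, fE_eq by apply HP. rewrite !N2_cheb.
      pose proof (B20_E (cos tE) (COS_bound tE)) as K.
      pose proof (HP tE) as P. rewrite N2_cheb in P.
      assert (K2 : sqrt (NC (gbdf5_c 20) (cos tE)) <= 2501825/2115968 * sqrt (NC (gbdf5_a 20) (cos tE))).
      { rewrite <- (sqrt_sq (2501825/2115968)) by lra. rewrite <- sqrt_mult_alt by (apply pow2_ge_0).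
        apply sqrt_le_1_alt. exact K. }
      pose proof (sqrt_lt_R0 _ P).
      apply Rmult_le_reg_r with (sqrt (NC (gbdf5_a 20) (cos tE))); [lra|].
      unfold Rdiv. rewrite Rmult_assoc, Rinv_l by lra. lra. }
    assert (SL : 1769085/2115968 <= lI).
    { rewrite <- EL, fL_eq by apply HP. rewrite DT_cheb, N2_cheb.
      pose proof (B20_L (cos tL) (COS_bound tL)) as K.
      pose proof (HP tL) as P. rewrite N2_cheb in P.
      apply Rmult_le_reg_r with (NC (gbdf5_a 20) (cos tL)); [lra|].
      replace (DC (gbdf5_b 20) (gbdf5_a 20) (cos tL) / NC (gbdf5_a 20) (cos tL) * NC (gbdf5_a 20) (cos tL))
        with (DC (gbdf5_b 20) (gbdf5_a 20) (cos tL)) by (field; lra). lra. }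
    split; [exact SF|]. split; [exact SE|]. split; [exact SL|].
    apply Rmult_le_reg_r with sE; [exact HsE|].
    replace (lI / sE * sE) with lI by (field; lra). nra.
Qed.
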